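(* Let $q=r^2$ where $r$ is a prime power, and let $s\le l$ be positive integers. Let $C_1,C_2,\dots,C_s$ be linear codes of the same length $m$ over $\mathbb{F}_q$ and let $A\in M_{s,l}(\mathbb{F}_q)$. If $AA^\dagger$ is anti-diagonal (i.e., its only possibly nonzero entries are in positions $(i,s-i+1)$) and $C_i\subseteq C_{s-i+1}^{\perp_H}$ for all $1\le i\le s$, then the matrix-product code $C_A=[C_1,\dots,C_s]\cdot A$ satisfies $C_A\subseteq C_A^{\perp_H}$.
   Context: For $a\in\mathbb{F}_q$, $\overline{a}:=a^r$. For a matrix $A=[a_{ij}]$ over $\mathbb{F}_q$, $A^\dagger:=[\overline{a_{ji}}]$. The Hermitian inner product on $\mathbb{F}_q^n$ is $\langle u,v\rangle_H=\sum_{i} u_i\overline{v_i}$, and $C^{\perp_H}$ is the dual of $C$ with respect to it. $M_{s,l}(\mathbb{F}_q)$ is the set of $s\times l$ matrices over $\mathbb{F}_q$. If $C_i$ has generator matrix $G_i$ and $A=[a_{ij}]\in M_{s,l}(\mathbb{F}_q)$, the matrix-product code $[C_1,\dots,C_s]\cdot A$ is the linear code of length $ml$ generated by the block matrix whose $(i,j)$ block is $a_{ij}G_i$. *)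

(* Defs.v *)
From HB Require Import structures.
From mathcomp Require Import all_boot all_order all_algebra all_field.
Set Implicit Arguments. Unset Strict Implicit. Unset Printing Implicit Defensive.
Import GRing.Theory.
Local Open Scope ring_scope.

Definition prime_power (r : nat) : Prop :=
  exists p k : nat, prime p /\ (0 < k)%N /\ r = (p ^ k)%N.

Section Defs.
Variables (F : finFieldType) (r : nat).

Definition hconj (a : F) : F := a ^+ r.

Definition hadj (s l : nat) (A : 'M[F]_(s, l)) : 'M[F]_(l, s) :=
  \matrix_(i, j) hconj (A j i).

Definition hip (n : nat) (u v : 'rV[F]_n) : F :=
  \sum_(i < n) u 0 i * hconj (v 0 i).

Definition herm_dual (n : nat) (S : {set 'rV[F]_n}) : {set 'rV[F]_n} :=
  [set u | [forall v in S, hip u v == 0]].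

Definition anti_diag (s : nat) (M : 'M[F]_s) : Prop :=
  forall i j : 'I_s, (i + j)%N != s.-1 -> M i j = 0.

Definition code_set (m : nat) (C : {vspace 'rV[F]_m}) : {set 'rV[F]_m} :=
  [set x | x \in C].

(* Block j occupies coordinates j*m .. j*m+m-1 (mxvec is row-major). *)
Definition mp_word (s l m : nat) (A : 'M[F]_(s, l)) (c : 'I_s -> 'rV[F]_m)
  : 'rV[F]_(l * m) :=
  mxvec (\matrix_(j < l, t < m) \sum_(i < s) A i j * c i 0 t).

Definition mp_code (s l m : nat) (C : 'I_s -> {vspace 'rV[F]_m})
  (A : 'M[F]_(s, l)) : {set 'rV[F]_(l * m)} :=
  [set x | [exists c : {ffun 'I_s -> 'rV[F]_m},
             [forall i, c i \in C i] && (x == mp_word A c)]].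
End Defs.

(* Main.v *)
Require Import Defs.
From HB Require Import structures.
From mathcomp Require Import all_boot all_order all_algebra all_field.
From mathcomp Require Import zify.
Import GRing.Theory.
Local Open Scope ring_scope.

Lemma sum_mxvec (F : finFieldType) (l m : nat) (f : 'I_(l * m) -> F) :
  \sum_k f k = \sum_(j < l) \sum_(t < m) f (mxvec_index j t).
Proof.
rewrite pair_bigA /= (reindex (uncurry (@mxvec_index l m)) (curry_mxvec_bij l m)).
by apply: eq_bigr => -[a b] _.
Qed.

Theorem theorem3p2 (F : finFieldType) (r s l m : nat)
  (C : 'I_s -> {vspace 'rV[F]_m}) (A : 'M[F]_(s, l)) :
  prime_power r -> #|F| = (r ^ 2)%N ->
  (0 < s)%N -> (s <= l)%N ->
  anti_diag (A *m hadj r A) ->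
  (forall i : 'I_s,
     code_set (C i) \subset herm_dual r (code_set (C (rev_ord i)))) ->
  mp_code C A \subset herm_dual r (mp_code C A).
Proof.
move=> [p [k [pp [k0 ->]]]] cardF _ _ hA hC.
have pc : p \in [pchar F].
  by apply: (@card_finPcharP F p (k * 2)) => //; rewrite cardF expnM.
have hD : forall a b : F, hconj (p ^ k) (a + b) = hconj (p ^ k) a + hconj (p ^ k) b.
  move=> a b; rewrite /hconj exprDn_pchar //.
  by rewrite pnatX pnatE // pc.
have hM : forall a b : F, hconj (p ^ k) (a * b) = hconj (p ^ k) a * hconj (p ^ k) b.
  by move=> a b; rewrite /hconj exprMn.
have h0 : hconj (p ^ k) (0 : F) = 0 by rewrite /hconj expr0n expn_eq0 eqn0Ngt (prime_gt0 pp).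
have hS : forall (I : finType) (f : I -> F), hconj (p ^ k) (\sum_i f i) = \sum_i hconj (p ^ k) (f i).
  by move=> I f; apply: (big_morph _ hD h0).
apply/subsetP => x; rewrite inE => /existsP [c /andP [/forallP cC /eqP ->]].
rewrite inE; apply/forallP => y; apply/implyP; rewrite inE.
move=> /existsP [d /andP [/forallP dC /eqP ->]].
set M := A *m hadj (p ^ k) A.
have -> : hip (p ^ k) (mp_word A c) (mp_word A d) =
    \sum_(i < s) \sum_(j < s) M i j * hip (p ^ k) (c i) (d j).
  rewrite /hip sum_mxvec /mp_word.
  under eq_bigr => j _ do under eq_bigr => t _ do rewrite !mxvecE !mxE.
  under eq_bigr => j _ do under eq_bigr => t _ do
    rewrite hS mulr_suml.
  under eq_bigr => j _ do under eq_bigr => t _ do under eq_bigr => i _ do rewrite mulr_sumr.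
  under eq_bigr => j _ do rewrite exchange_big.
  rewrite exchange_big.
  under eq_bigr => i _ do under eq_bigr => j _ do rewrite exchange_big.
  under eq_bigr => i _ do rewrite exchange_big.
  apply: eq_bigr => i _; apply: eq_bigr => q _.
  rewrite !mxE mulr_suml; apply: eq_bigr => j _.
  rewrite !mxE mulr_sumr; apply: eq_bigr => t _.
  by rewrite hM mulrACA.
apply/eqP; apply: big1 => i _; apply: big1 => j _.
have [e|ne] := eqVneq j (rev_ord i).
  have := subsetP (hC i) (c i); rewrite !inE => /(_ (cC i)) /forallP /(_ (d j)).
  by rewrite e inE (dC (rev_ord i)) /= => /eqP ->; rewrite mulr0.
rewrite hA ?mul0r //; apply: contra ne => /eqP e; apply/eqP/val_inj => /=.
move: e; case: i j => i ip [j jp] /= e.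
clear -e ip jp; lia.
Qed.
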